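(* Let $Q=\langle b\rangle\ltimes_{(g,\gamma)}X$ and let $r=r(g,\gamma)$. Then $$N(Q)=\{(b^i,x): x\in\mathrm{Rad}(\gamma)\text{ and either } i=0 \text{ or } r \text{ divides } i\},$$ $$Z(Q)=\{(b^i,x)\in N(Q): |g| \text{ divides } i \text{ and } g(x)=x\}.$$ (Here ''$r$ divides $i$'' is false for $r=\infty$, and ''$|g|$ divides $i$'' means $g^i=\mathrm{id}$.)
   Context: Let $(X,+)$ be an abelian group and $(g,\gamma)$ a construction pair on it: $g$ a permutation of $X$, $\gamma:X\times X\to X$ symmetric, alternating, biadditive, with (C1) $g^{-1}(g(x)+g(y))=x+y+\gamma(x,y)+g^{-1}(\gamma(x,y))+g^{-2}(\gamma(x,y))$, (C2) $\gamma(\gamma(x,y),z)=0$, (C3) $g^{-1}(\gamma(x,y))=\gamma(g(x),y)$ for all $x,y,z$. Let $\mathrm{Rad}(\gamma)=\{x:\gamma(x,y)=0\ \forall y\}$ and $r(g,\gamma)$ the least positive $r$ with $\sum_{0\le k<r}g^k(x)\in\mathrm{Rad}(\gamma)$ for all $x$ ($\infty$ if none). $I(i,j)$ is $\emptyset$ if $i=j$, $\{i,\dots,j-1\}$ if $i<j$, $\{j,\dots,i-1\}$ if $j<i$. For a cyclic group $C=\langle b\rangle$ such that (if finite) $|g|$ and $r(g,\gamma)$ divide $|C|$, $C\ltimes_{(g,\gamma)}X$ is the Moufang loop on $C\times X$ with multiplication $(b^i,x)(b^j,y)=(b^{i+j},g^{-j}(x)+y+\sum_{k\in I(i+j,-j)}g^{-k}(\gamma(x,y)))$.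 The nucleus $N(Q)$ of a loop is the set of $a$ with $a(yz)=(ay)z$, $y(az)=(ya)z$, $y(za)=(yz)a$ for all $y,z$; the center $Z(Q)$ is the set of $a\in N(Q)$ commuting with every element. *)

(* Defs.v *)
From mathcomp Require Import all_boot all_order all_algebra.
Set Implicit Arguments. Unset Strict Implicit. Unset Printing Implicit Defensive.
Import Order.TTheory GRing.Theory Num.Theory.
Local Open Scope ring_scope.

Section Defs.
Variable X : zmodType.

Definition gpow (g ginv : X -> X) (k : int) (x : X) : X :=
  match k with
  | Posz m => iter m g x
  | Negz m => iter m.+1 ginv x
  end.

Definition Rad (gamma : X -> X -> X) (x : X) : Prop :=
  forall y, gamma x y = 0.

Definition construction_pair (g ginv : X -> X) (gamma : X -> X -> X) : Prop :=
  cancel g ginv /\ cancel ginv g /\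
  (forall x y, gamma x y = gamma y x) /\
  (forall x, gamma x x = 0) /\
  (forall x y z, gamma (x + y) z = gamma x z + gamma y z) /\
  (forall x y z, gamma x (y + z) = gamma x y + gamma x z) /\
  (forall x y, ginv (g x + g y) =
     x + y + gamma x y + ginv (gamma x y) + ginv (ginv (gamma x y))) /\
  (forall x y z, gamma (gamma x y) z = 0) /\
  (forall x y, ginv (gamma x y) = gamma (g x) y).

Definition r_prop (g ginv : X -> X) (gamma : X -> X -> X) (r : nat) : Prop :=
  forall x, Rad gamma (\sum_(k < r) gpow g ginv k%:Z x).

(* r is r(g,gamma) (the least positive such r); r(g,gamma) = oo iff no such r *)
Definition is_r (g ginv : X -> X) (gamma : X -> X -> X) (r : nat) : Prop :=
  [/\ (0 < r)%N, r_prop g ginv gamma r &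
      forall m, (0 < m)%N -> (m < r)%N -> ~ r_prop g ginv gamma m].

Definition r_divides (g ginv : X -> X) (gamma : X -> X -> X) (i : int) : Prop :=
  exists r, is_r g ginv gamma r /\ (r%:Z %| i)%Z.

(* sum over k in I(i,j) = {min i j, ..., max i j - 1} *)
Definition sumI (i j : int) (F : int -> X) : X :=
  \sum_(t < `|j - i|%N) F (Num.min i j + t%:Z).

(* The cyclic group C = <b> has order n, with n = 0 meaning C infinite.
   b^i is represented by the integer i, normalized to 0 <= i < n when n > 0. *)
Definition normz (n : nat) (i : int) : int :=
  if n == 0%N then i else (i %% n%:Z)%Z.

Definition canon (n : nat) (a : int * X) : Prop := normz n a.1 = a.1.

Definition qmul (g ginv : X -> X) (gamma : X -> X -> X) (n : nat)
  (a b : int * X) : int * X :=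
  let: (i, x) := a in let: (j, y) := b in
  (normz n (i + j),
   gpow g ginv (- j) x + y +
   sumI (i + j) (- j) (fun k => gpow g ginv (- k) (gamma x y))).

Definition in_nucleus (g ginv : X -> X) (gamma : X -> X -> X) (n : nat)
  (a : int * X) : Prop :=
  let m := qmul g ginv gamma n in
  canon n a /\
  forall y z, canon n y -> canon n z ->
    [/\ m a (m y z) = m (m a y) z,
        m y (m a z) = m (m y a) z &
        m y (m z a) = m (m y z) a].

Definition in_center (g ginv : X -> X) (gamma : X -> X -> X) (n : nat)
  (a : int * X) : Prop :=
  in_nucleus g ginv gamma n a /\
  forall y, canon n y -> qmul g ginv gamma n a y = qmul g ginv gamma n y a.

End Defs.

(* Main.v *)
Require Import Defs.
From mathcomp Require Import all_boot all_order all_algebra.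
From mathcomp Require Import zify ring lra.
From Stdlib Require Import Classical.
Import Order.TTheory GRing.Theory Num.Theory.
Set Implicit Arguments. Unset Strict Implicit. Unset Printing Implicit Defensive.
Local Open Scope ring_scope.

Lemma int_ind2 (P : int -> Prop) :
  P 0 -> (forall m, P m -> P (m + 1)) -> (forall m, P m -> P (m - 1)) ->
  forall m, P m.
Proof.
move=> P0 PS PP [k|k].
  elim: k => [//|k IH]; have E : Posz k.+1 = Posz k + 1 by rewrite -addn1 PoszD.
  by rewrite E; apply: PS.
elim: k => [|k IH]; first by have := PP _ P0; rewrite sub0r.
have E : Negz k.+1 = Negz k - 1 by rewrite !NegzE; lia.
by rewrite E; apply: PP.
Qed.

Section Basics.
Variable X : zmodType.
Variables (g ginv : X -> X) (gamma : X -> X -> X).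
Hypothesis HC : construction_pair g ginv gamma.

Local Notation G := (gpow g ginv).
Local Notation Rd := (Rad gamma).

Lemma gK : cancel g ginv. Proof. by case: HC. Qed.
Lemma gVK : cancel ginv g. Proof. by case: HC => _ []. Qed.
Lemma gamC x y : gamma x y = gamma y x. Proof. by case: HC => _ [] _ []. Qed.
Lemma gamxx x : gamma x x = 0. Proof. by case: HC => _ [] _ [] _ []. Qed.
Lemma gamDl x y z : gamma (x + y) z = gamma x z + gamma y z.
Proof. by case: HC => _ [] _ [] _ [] _ []. Qed.
Lemma gamDr x y z : gamma x (y + z) = gamma x y + gamma x z.
Proof. by case: HC => _ [] _ [] _ [] _ [] _ []. Qed.
Lemma C1 x y : ginv (g x + g y) =
     x + y + gamma x y + ginv (gamma x y) + ginv (ginv (gamma x y)).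
Proof. by case: HC => _ [] _ [] _ [] _ [] _ [] _ [] H _; apply: H. Qed.
Lemma C2 x y z : gamma (gamma x y) z = 0.
Proof. by case: HC => _ [] _ [] _ [] _ [] _ [] _ [] _ [] H _; apply: H. Qed.
Lemma C3 x y : ginv (gamma x y) = gamma (g x) y.
Proof. by case: HC => _ [] _ [] _ [] _ [] _ [] _ [] _ [] _ H; apply: H. Qed.

Lemma gam0l y : gamma 0 y = 0.
Proof. by apply/(addrI (gamma 0 y)); rewrite -gamDl !addr0. Qed.
Lemma gam0r y : gamma y 0 = 0. Proof. by rewrite gamC gam0l. Qed.
Lemma gamNl x y : gamma (- x) y = - gamma x y.
Proof. by apply/(addrI (gamma x y)); rewrite -gamDl !subrr gam0l. Qed.
Lemma gam2 x y : gamma x y + gamma x y = 0.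
Proof. by have := gamxx (x + y); rewrite gamDl !gamDr !gamxx add0r addr0 (gamC y x). Qed.
Lemma gamN x y : - gamma x y = gamma x y.
Proof. by apply/(addrI (gamma x y)); rewrite subrr gam2. Qed.

Lemma ginv0 : ginv 0 = 0. Proof. have H := C3 0 0. rewrite gam0r gam0r in H. exact H. Qed.
Lemma g0 : g 0 = 0. Proof. by rewrite -{1}ginv0 gVK. Qed.
Lemma gC3' x y : g (gamma x y) = gamma (ginv x) y.
Proof. by rewrite -[in LHS](gVK x) -C3 gVK. Qed.

Lemma Rad_gam x y : Rd (gamma x y). Proof. by move=> z; exact: C2. Qed.
Lemma Rad0 : Rd 0. Proof. by move=> z; exact: gam0l. Qed.
Lemma RadD a b : Rd a -> Rd b -> Rd (a + b).
Proof. by move=> Ha Hb z; rewrite gamDl Ha Hb addr0. Qed.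
Lemma RadN a : Rd a -> Rd (- a).
Proof. by move=> Ha z; rewrite gamNl Ha oppr0. Qed.
Lemma Rad_g a : Rd a -> Rd (g a).
Proof. by move=> Ha z; rewrite -C3 Ha ginv0. Qed.
Lemma Rad_ginv a : Rd a -> Rd (ginv a).
Proof. by move=> Ha z; rewrite -gC3' Ha g0. Qed.
Lemma Rad_r a z : Rd a -> gamma z a = 0. Proof. by move=> Ha; rewrite gamC Ha. Qed.

Lemma g_addR a d : Rd d -> g (a + d) = g a + g d.
Proof.
move=> Hd; apply: (can_inj gVK); rewrite C1 gK (Rad_r _ Hd) ginv0 ginv0.
by rewrite !addr0.
Qed.
Lemma ginv_addR a d : Rd d -> ginv (a + d) = ginv a + ginv d.
Proof.
move=> Hd; rewrite -{1}(gVK a) -{1}(gVK d) C1 (Rad_r _ (Rad_ginv Hd)) ginv0 ginv0.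
by rewrite !addr0.
Qed.

Lemma gpow0 x : G 0 x = x. Proof. by []. Qed.
Lemma gpowS m x : G (m + 1) x = g (G m x).
Proof.
case: m => [k|k]; first by rewrite -PoszD addn1.
case: k => [|k]; first by rewrite /= gVK.
have -> : Negz k.+1 + 1 = Negz k by rewrite !NegzE; lia.
by rewrite /= gVK.
Qed.
Lemma gpowP m x : G (m - 1) x = ginv (G m x).
Proof. by rewrite -{2}(subrK 1 m) gpowS gK. Qed.
Lemma gpowD a b x : G (a + b) x = G a (G b x).
Proof.
elim/int_ind2: a => [|a IH|a IH]; first by rewrite add0r.
  by rewrite -addrA (addrC 1) addrA gpowS IH -gpowS.
by rewrite -addrA (addrC (-1)) addrA gpowP IH -gpowP.
Qed.
Lemma gpow1 x : G 1 x = g x. Proof. by []. Qed.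
Lemma gpowN1 x : G (-1) x = ginv x. Proof. by []. Qed.
Lemma gpowNK m x : G (- m) (G m x) = x.
Proof. by rewrite -gpowD addNr. Qed.
Lemma gpowKN m x : G m (G (- m) x) = x.
Proof. by rewrite -gpowD addrN. Qed.

Lemma gpow_gam k u v : G (- k) (gamma u v) = gamma (G k u) v.
Proof.
elim/int_ind2: k => [//|k IH|k IH].
  by rewrite opprD gpowP IH C3 -gpowS.
by rewrite opprB addrC gpowS IH gC3' -gpowP.
Qed.
Lemma gam_swap s x y : gamma x (G s y) = gamma (G s x) y.
Proof. by rewrite gamC -gpow_gam gamC gpow_gam. Qed.

Lemma Rad_gpow m a : Rd a -> Rd (G m a).
Proof.
move=> Ha; elim/int_ind2: m => [//|m IH|m IH].
  by rewrite gpowS; apply: Rad_g.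
by rewrite gpowP; apply: Rad_ginv.
Qed.
Lemma Rad_gpowE m a : Rd (G m a) -> Rd a.
Proof. by move=> H; rewrite -(gpowNK m a); apply: Rad_gpow. Qed.

Lemma gpow_addR m a d : Rd d -> G m (a + d) = G m a + G m d.
Proof.
move=> Hd; elim/int_ind2: m => [//|m IH|m IH].
  by rewrite !gpowS IH g_addR //; apply: Rad_gpow.
by rewrite !gpowP IH ginv_addR //; apply: Rad_gpow.
Qed.
Lemma gpow_addL m a d : Rd d -> G m (d + a) = G m d + G m a.
Proof. by move=> Hd; rewrite addrC gpow_addR // addrC. Qed.

Lemma gpow_fix m x : g x = x -> G m x = x.
Proof.
move=> Hx; elim/int_ind2: m => [//|m IH|m IH]; first by rewrite gpowS IH.
by rewrite gpowP IH -{1}Hx gK.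
Qed.


Definition Phi a b u v := sumI a b (fun t => gamma (G t u) v).

Lemma Phi_step a b u v : Phi a (b + 1) u v = Phi a b u v + gamma (G b u) v.
Proof.
rewrite /Phi /sumI.
have [[m ->]|[m ->]] : (exists m : nat, b = a + Posz m) \/ (exists m : nat, b = a - (Posz m.+1)).
  by case E: (b - a) => [m|m]; [left; exists m | right; exists m]; move: E; rewrite ?NegzE; lia.
  have -> : absz (a + Posz m + 1 - a)%R = m.+1 by lia.
  have -> : absz (a + Posz m - a)%R = m by lia.
  rewrite !min_l; [|lia|lia].
  by rewrite big_ord_recr /=.
have -> : absz (a - Posz m.+1 + 1 - a)%R = m by lia.
have -> : absz (a - Posz m.+1 - a)%R = m.+1 by lia.
rewrite min_r; last by lia.
rewrite min_r; last by lia.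
rewrite big_ord_recl /= addr0 [RHS]addrC addrA gam2 add0r.
apply: eq_bigr => i _; congr (gamma (G _ u) v).
rewrite /bump /=. lia.
Qed.

Lemma Phi_aa a u v : Phi a a u v = 0.
Proof. by rewrite /Phi /sumI subrr big_ord0. Qed.

Lemma Phi_chain a b c u v : Phi a b u v + Phi b c u v = Phi a c u v.
Proof.
rewrite -(addrNK b c) (addrC (c - b)); move: (c - b) => d.
elim/int_ind2: d => [|d IH|d IH]; first by rewrite addr0 Phi_aa addr0.
  by rewrite addrA !Phi_step addrA IH.
have E1 := Phi_step a (b + d - 1) u v; have E2 := Phi_step b (b + d - 1) u v.
rewrite subrK in E1 E2.
rewrite !addrA; apply/(addIr (gamma (G (b + d - 1) u) v)).
by rewrite -[LHS]addrA -E2 IH -E1.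
Qed.

Lemma Phi_swap a b u v : Phi a b u v = Phi b a u v.
Proof.
rewrite /Phi /sumI minC.
by have -> : absz (a - b)%R = absz (b - a)%R by rewrite -opprB abszN.
Qed.

Lemma Phi_shiftl a b s u v : Phi a b (G s u) v = Phi (a + s) (b + s) u v.
Proof.
rewrite /Phi /sumI.
have -> : (b + s - (a + s)) = b - a by ring.
have -> : Num.min (a + s) (b + s) = Num.min a b + s by rewrite addr_minl.
apply: eq_bigr => i _; rewrite -gpowD; congr (gamma (G _ u) v); ring.
Qed.

Lemma Phi_shiftr a b s u v : Phi a b u (G s v) = Phi (a + s) (b + s) u v.
Proof.
rewrite /Phi /sumI.
have -> : (b + s - (a + s)) = b - a by ring.
have -> : Num.min (a + s) (b + s) = Num.min a b + s by rewrite addr_minl.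
apply: eq_bigr => i _; rewrite gam_swap -gpowD; congr (gamma (G _ u) v); ring.
Qed.

Lemma Phi_symm a b u v : Phi a b u v = Phi a b v u.
Proof.
rewrite /Phi /sumI; apply: eq_bigr => i _.
by rewrite -gam_swap gamC.
Qed.

Lemma Phi_Dr a b u v w : Phi a b u (v + w) = Phi a b u v + Phi a b u w.
Proof. by rewrite /Phi /sumI -big_split; apply: eq_bigr => i _; rewrite gamDr. Qed.
Lemma Phi_Dl a b u v w : Phi a b (v + w) u = Phi a b v u + Phi a b w u.
Proof. by rewrite !(Phi_symm a b _ u) Phi_Dr. Qed.

Lemma Phi_Radr a b u v : Rd v -> Phi a b u v = 0.
Proof. by move=> Hv; rewrite /Phi /sumI big1 // => i _; rewrite Rad_r. Qed.
Lemma Phi_Radl a b u v : Rd u -> Phi a b u v = 0.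
Proof. by move=> Hu; rewrite Phi_symm Phi_Radr. Qed.

Lemma Rad_sum m (F : 'I_m -> X) : (forall i, Rd (F i)) -> Rd (\sum_(i < m) F i).
Proof.
move=> HF; elim/big_rec: _ => [|i x _ Hx]; first exact: Rad0.
exact: RadD.
Qed.

Lemma Rad_Phi a b u v : Rd (Phi a b u v).
Proof. by apply: Rad_sum => i; apply: Rad_gam. Qed.

Lemma Phi_gam a b u v : Phi a b u v = gamma (sumI a b (fun t => G t u)) v.
Proof.
rewrite /Phi /sumI.
by rewrite (big_morph (fun w => gamma w v) (fun x y => gamDl x y v) (gam0l v)).
Qed.

Lemma g_Phi a b u v : g (Phi a b u v) = Phi (a - 1) (b - 1) u v.
Proof. by rewrite Phi_gam gC3' -gpowN1 -gam_swap -Phi_gam Phi_shiftr. Qed.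
Lemma ginv_Phi a b u v : ginv (Phi a b u v) = Phi (a + 1) (b + 1) u v.
Proof. by rewrite Phi_gam C3 -gpow1 -gam_swap -Phi_gam Phi_shiftr. Qed.

Lemma gpow_Phi s a b u v : G s (Phi a b u v) = Phi (a - s) (b - s) u v.
Proof.
elim/int_ind2: s => [|s IH|s IH]; first by rewrite !subr0.
  by rewrite gpowS IH g_Phi !opprD !addrA.
by rewrite gpowP IH ginv_Phi !opprB !addrA !(addrC _ 1) !addrA !(addrC 1) -!addrA (addrC 1) .
Qed.


Lemma Phi2 a b u v : Phi a b u v + Phi a b u v = 0.
Proof. by rewrite Phi_gam gam2. Qed.
Lemma PhiN a b u v : - Phi a b u v = Phi a b u v.
Proof. by rewrite Phi_gam gamN. Qed.

Lemma Phi_eq a b a' b' u v : a = a' -> b = b' -> Phi a b u v = Phi a' b' u v.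
Proof. by move=> -> ->. Qed.
Lemma Phi_chain' a b b' c u v : b = b' -> Phi a b u v + Phi b' c u v = Phi a c u v.
Proof. by move=> ->; apply: Phi_chain. Qed.

Lemma Phi03 u v : Phi 0 3 u v = gamma u v + gamma (g u) v + gamma (g (g u)) v.
Proof.
have E3 : (3 : int) = 0 + 1 + 1 + 1 by [].
by rewrite E3 !Phi_step Phi_aa add0r !gpowS.
Qed.

Lemma g_add u v : g (u + v) = g u + g v + Phi 2 (-1) u v.
Proof.
have H' : ginv (g u + g v) = (u + v) + Phi 0 3 u v.
  by rewrite C1 Phi03 -!C3 !addrA.
have H2 : g u + g v = g (u + v) + g (Phi 0 3 u v).
  rewrite -[RHS]g_addR; last exact: Rad_Phi.
  have := f_equal g H'; rewrite gVK => <-; by [].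
by rewrite H2 -addrA g_Phi (Phi_swap 2) Phi2 addr0.
Qed.

Lemma ginv_add u v : ginv (u + v) = ginv u + ginv v + Phi (-2) 1 u v.
Proof.
have H := C1 (ginv u) (ginv v); rewrite !gVK in H.
rewrite H -!addrA; congr (_ + (_ + _)).
have -> : Phi (-2) 1 u v = Phi (0 + -2) (3 + -2) u v by [].
rewrite -Phi_shiftl Phi03 -!C3.
have E : G (-2) u = ginv (ginv u) by rewrite -gpowN1 -gpowN1 -gpowD.
by rewrite E -(gpowN1 v) gam_swap gpowN1 !addrA.
Qed.

Lemma gpow_add m u v : G m (u + v) = G m u + G m v + Phi (2 * m) (- m) u v.
Proof.
elim/int_ind2: m => [|m IH|m IH].
  by rewrite mulr0 oppr0 Phi_aa addr0.
  rewrite gpowS IH (g_addR _ (Rad_Phi _ _ _ _)) g_add g_Phi Phi_shiftl Phi_shiftr -!gpowS.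
  rewrite -addrA; congr (_ + _).
  rewrite (Phi_swap (2 + m + m)) addrC (Phi_swap (2 * m - 1)).
  rewrite (@Phi_chain' _ (2 * m - 1) (-1 + m + m)); last by ring.
  rewrite Phi_swap; apply: Phi_eq; ring.
rewrite gpowP IH (ginv_addR _ (Rad_Phi _ _ _ _)) ginv_add ginv_Phi Phi_shiftl Phi_shiftr -!gpowP.
rewrite -addrA; congr (_ + _).
rewrite (@Phi_chain' _ (1 + m + m) (2 * m + 1)); last by ring.
apply: Phi_eq; ring.
Qed.

Definition V (L : int) := forall a u v, Phi a (a + L) u v = 0.

Lemma V0 : V 0. Proof. by move=> a u v; rewrite addr0 Phi_aa. Qed.
Lemma VD L1 L2 : V L1 -> V L2 -> V (L1 + L2).
Proof.
move=> H1 H2 a u v; rewrite -(Phi_chain a (a + L1)) H1 add0r addrA; exact: H2.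
Qed.
Lemma VN L : V L -> V (- L).
Proof.
move=> H a u v; rewrite Phi_swap.
by have := H (a - L) u v; rewrite subrK.
Qed.
Lemma VM L t : V L -> V (t * L).
Proof.
move=> H; elim/int_ind2: t => [|t IH|t IH]; first by rewrite mul0r; apply: V0.
  by rewrite mulrDl mul1r; apply: VD.
by rewrite mulrBl mul1r; apply: VD => //; apply: VN.
Qed.

Lemma Phi_V a b a' b' u v : V (a' - a) -> V (b' - b) -> Phi a b u v = Phi a' b' u v.
Proof.
move=> Ha Hb.
have E1 : Phi a a' u v = 0 by have := Ha a u v; rewrite addrC subrK.
have E2 : Phi b' b u v = 0 by have := VN Hb b' u v; rewrite opprB addrC subrK.
by rewrite -(Phi_chain a a') E1 add0r -(Phi_chain a' b') E2 addr0.
Qed.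

Lemma V_r r : r_prop g ginv gamma r -> V r%:Z.
Proof.
move=> Hr a u v; rewrite Phi_gam /sumI.
have -> : absz (a + r%:Z - a)%R = r by rewrite addrC addKr.
rewrite min_l; last by rewrite lerDl.
have := Hr (G a u) v.
have -> : \sum_(k < r) G k (G a u) = \sum_(t < r) G (a + t) u.
  by apply: eq_bigr => t _; rewrite -gpowD addrC.
by [].
Qed.

Lemma qmulE n i x j y : qmul g ginv gamma n (i, x) (j, y) =
  (normz n (i + j), G (- j) x + y + Phi (i + j) (- j) x y).
Proof.
rewrite /qmul /Phi /sumI; congr (_, _ + _); apply: eq_bigr => t _.
exact: gpow_gam.
Qed.

Variable n : nat.
Hypothesis Hn : (0 < n)%N ->
     (forall x, G n%:Z x = x) /\ (exists r, is_r g ginv gamma r /\ (r %| n)%N).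

Lemma gpow_per a t x : G (a + t * n%:Z) x = G a x.
Proof.
case: (posnP n) => [->|n0]; first by rewrite mulr0 addr0.
have [Gn _] := Hn n0.
rewrite gpowD; congr (G a _).
elim/int_ind2: t => [//|t IH|t IH].
  by rewrite mulrDl mul1r gpowD Gn.
rewrite mulrBl mul1r gpowD.
by rewrite -{1}(Gn x) gpowNK.
Qed.

Lemma Vn t : V (t * n%:Z).
Proof.
case: (posnP n) => [->|n0]; first by rewrite mulr0; apply: V0.
have [_ [r [[_ Hr _] Hrn]]] := Hn n0.
apply: VM; rewrite -(divnK Hrn) PoszM; apply: VM; exact: V_r.
Qed.

Lemma normz_ex i : exists t, normz n i = i + t * n%:Z.
Proof.
rewrite /normz; case: eqP => [_|_]; first by exists 0; rewrite mul0r addr0.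
exists (- (i %/ n%:Z)%Z); have E := divz_eq i n%:Z.
rewrite {2}E; ring.
Qed.

Lemma normzD a t : normz n (a + t * n%:Z) = normz n a.
Proof.
rewrite /normz; case: eqP => [->|_]; first by rewrite mulr0 addr0.
by rewrite addrC modzMDl.
Qed.

Lemma Vlin i : V i -> forall c t, V (c * i + t * n%:Z).
Proof. by move=> Vi c t; apply: VD; [apply: VM | apply: Vn]. Qed.

Lemma Vlin_eq i : V i -> forall c t L, L = c * i + t * n%:Z -> V L.
Proof. by move=> Vi c t L ->; apply: Vlin. Qed.

Local Notation M := (qmul g ginv gamma n).

Lemma nuc1 i x j y k z : Rd x -> V i ->
  M (i, x) (M (j, y) (k, z)) = M (M (i, x) (j, y)) (k, z).
Proof.
move=> Hx Vi.
have [s1 E1] := normz_ex (j + k); have [s2 E2] := normz_ex (i + j).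
rewrite !qmulE E1 E2; congr (_, _).
  rewrite (_ : i + (j + k + s1 * n%:Z) = (i + j + k) + s1 * n%:Z); last by ring.
  rewrite (_ : i + j + s2 * n%:Z + k = (i + j + k) + s2 * n%:Z); last by ring.
  by rewrite !normzD.
rewrite !(Phi_Radl _ _ _ Hx) !addr0.
rewrite (gpow_addL _ _ (Rad_gpow _ Hx)) Phi_Dl (Phi_Radl _ _ _ (Rad_gpow _ Hx)) add0r -gpowD.
rewrite (_ : - (j + k + s1 * n%:Z) = - (j + k) + (- s1) * n%:Z); last by ring.
rewrite gpow_per (_ : - k + - j = - (j + k)); last by ring.
rewrite (@Phi_V (i + j + s2 * n%:Z + k) (- k) (j + k) (- k)).
- by rewrite !addrA.
- by refine (@Vlin_eq i Vi (-1) (- s2) _ _); ring.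
- by refine (@Vlin_eq i Vi 0 0 _ _); ring.
Qed.

Lemma rearr (a b x p1 p2 : X) : a + (b + x) + (p1 + p2) = a + b + p1 + p2 + x.
Proof.
rewrite -!addrA; congr (_ + _); congr (_ + _).
by rewrite addrC -addrA.
Qed.

Lemma nuc2 i x j y k z : Rd x -> V i ->
  M (j, y) (M (i, x) (k, z)) = M (M (j, y) (i, x)) (k, z).
Proof.
move=> Hx Vi.
have [s1 E1] := normz_ex (i + k); have [s2 E2] := normz_ex (j + i).
rewrite !qmulE E1 E2; congr (_, _).
  rewrite (_ : j + (i + k + s1 * n%:Z) = (i + j + k) + s1 * n%:Z); last by ring.
  rewrite (_ : j + i + s2 * n%:Z + k = (i + j + k) + s2 * n%:Z); last by ring.
  by rewrite !normzD.
rewrite !(Phi_Radl _ _ _ Hx) !(Phi_Radr _ _ _ Hx) !addr0.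
rewrite Phi_Dr (Phi_Radr _ _ _ (Rad_gpow _ Hx)) add0r.
rewrite (gpow_addR _ _ Hx) -gpowD Phi_Dl (Phi_Radl _ _ _ Hx) addr0 Phi_shiftl.
rewrite (_ : - (i + k + s1 * n%:Z) = (- k + - i) + (- s1) * n%:Z); last by ring.
rewrite gpow_per.
rewrite (@Phi_V (j + (i + k + s1 * n%:Z)) (- k + - i + - s1 * n%:Z)
                (j + i + s2 * n%:Z + k + - i) (- k + - i)).
- by rewrite !addrA.
- by refine (@Vlin_eq i Vi (-1) (s2 - s1) _ _); ring.
- by refine (@Vlin_eq i Vi 0 s1 _ _); ring.
Qed.

Lemma nuc3 i x j y k z : Rd x -> V i ->
  M (j, y) (M (k, z) (i, x)) = M (M (j, y) (k, z)) (i, x).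
Proof.
move=> Hx Vi.
have [s1 E1] := normz_ex (k + i); have [s2 E2] := normz_ex (j + k).
rewrite !qmulE E1 E2; congr (_, _).
  rewrite (_ : j + (k + i + s1 * n%:Z) = (i + j + k) + s1 * n%:Z); last by ring.
  rewrite (_ : j + k + s2 * n%:Z + i = (i + j + k) + s2 * n%:Z); last by ring.
  by rewrite !normzD.
rewrite !(Phi_Radr _ _ _ Hx) !addr0.
rewrite Phi_Dr (Phi_Radr _ _ _ Hx) addr0 Phi_shiftr.
rewrite (gpow_addR _ _ (Rad_Phi _ _ _ _)) gpow_add -gpowD Phi_shiftl gpow_Phi.
rewrite (_ : - (k + i + s1 * n%:Z) = (- i + - k) + (- s1) * n%:Z); last by ring.
rewrite gpow_per.
have HP : Phi (2 * - i - k) (- - i - k) y z + Phi (j + k - - i) (- k - - i) y z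
   = Phi (j + (k + i + s1 * n%:Z) - i) (- i - k + - s1 * n%:Z - i) y z.
  rewrite (Phi_swap (j + k - - i)) (@Phi_chain' _ (- - i - k) (- k - - i)); last by ring.
  rewrite Phi_swap; apply: Phi_V.
  - by refine (@Vlin_eq i Vi (-1) s1 _ _); ring.
  - by refine (@Vlin_eq i Vi 0 (- s1) _ _); ring.
by rewrite -HP rearr.
Qed.

Lemma normz0 : normz n 0 = 0.
Proof. by rewrite /normz; case: eqP => // _; rewrite mod0z. Qed.
Lemma normz1 : n <> 1%N -> normz n 1 = 1.
Proof.
move=> n1; rewrite /normz; case: eqP => // /eqP n0; rewrite modz_small //.
by apply/andP; split => //; rewrite ltz_nat; lia.
Qed.

Lemma gpow00 m : G m 0 = 0.
Proof. by apply: gpow_fix; exact: g0. Qed.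

Lemma canc1 (x y z a b c : X) :
  x + (y + z) + (a + b) = x + y + a + z + (b + c) -> c = 0.
Proof.
move=> H.
have E : x + (y + z) + (a + b) = x + y + a + z + b.
  rewrite !addrA; congr (_ + _); rewrite -[LHS]addrA (addrC z) addrA //.
rewrite E addrA in H.
by have := H; rewrite -{1}(addr0 (x + y + a + z + b)) => /addrI.
Qed.

Lemma canc2 (w a c : X) : w + a = w + (a + c) -> c = 0.
Proof. by rewrite -{1}(addr0 a) => /addrI /addrI. Qed.

Lemma rprop_sub a b : r_prop g ginv gamma a -> r_prop g ginv gamma b -> (a <= b)%N ->
  r_prop g ginv gamma (b - a).
Proof.
move=> Ha Hb ab x; rewrite -(gpowKN a%:Z x); move: (G (- a%:Z) x) => {}x.
have E : \sum_(k < b) G k%:Z x = \sum_(k < a) G k%:Z x + \sum_(k < b - a) G k%:Z (G a%:Z x).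
  rewrite -!(big_mkord xpredT (fun k : nat => G k%:Z _)) (@big_cat_nat _ _ _ a 0 b) //.
  congr (_ + _); rewrite -{1}(add0n a) big_addn.
  by apply: eq_bigr => k _; rewrite PoszD gpowD.
have -> : \sum_(k < b - a) G k%:Z (G a%:Z x) =
   \sum_(k < b) G k%:Z x - \sum_(k < a) G k%:Z x by rewrite E addrC addKr.
apply: RadD; [exact: Hb | apply: RadN; exact: Ha].
Qed.

Lemma rprop_mod r b : r_prop g ginv gamma r -> r_prop g ginv gamma b ->
  r_prop g ginv gamma (b %% r).
Proof.
move=> Hr Hb.
have H : forall q, (q * r <= b)%N -> r_prop g ginv gamma (b - q * r).
  elim => [|q IH] h; first by rewrite mul0n subn0.
  have h' : (q * r <= b)%N by apply: leq_trans h; rewrite leq_mul2r leqnSn orbT.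
  have -> : (b - q.+1 * r = (b - q * r) - r)%N by rewrite mulSn addnC subnDA.
  apply: rprop_sub => //; first exact: IH.
  by rewrite leq_subRL // addnC -mulSn.
have -> : (b %% r = b - b %/ r * r)%N by rewrite {2}(divn_eq b r) addKn.
by apply: H; rewrite leq_trunc_div.
Qed.

Lemma least_r (P : nat -> Prop) m : (0 < m)%N -> P m ->
  exists r, [/\ (0 < r)%N, P r & forall m', (0 < m')%N -> (m' < r)%N -> ~ P m'].
Proof.
elim/ltn_ind: m => m IH m0 Pm.
case: (classic (exists m', [/\ (0 < m')%N, (m' < m)%N & P m'])) => [[m' [h1 h2 h3]]|Hno].
  exact: (IH m' h2 h1 h3).
by exists m; split => // m' h1 h2 Pm'; apply: Hno; exists m'; split.
Qed.

Lemma rdiv_of i : i != 0 -> r_prop g ginv gamma (absz i) -> r_divides g ginv gamma i.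
Proof.
move=> i0 Hi.
have i0' : (0 < absz i)%N by rewrite absz_gt0.
have [r [r0 Hr Hmin]] := least_r i0' Hi.
exists r; split; first by split.
rewrite dvdzE /= /dvdn; apply/eqP.
have Hm := rprop_mod Hr Hi.
apply/eqP/negPn/negP => Hne.
apply: (Hmin _ _ _ Hm); first by rewrite lt0n.
by rewrite ltn_pmod.
Qed.

Lemma Phi0_rprop i : (forall y z, Phi i 0 y z = 0) -> r_prop g ginv gamma (absz i).
Proof.
move=> H x y.
have := H (G (- Num.min i 0) x) y.
rewrite Phi_gam /sumI sub0r abszN.
have -> : \sum_(t < absz i) G (Num.min i 0 + t%:Z) (G (- Num.min i 0) x)
         = \sum_(k < absz i) G k%:Z x.
  by apply: eq_bigr => t _; rewrite -gpowD addrAC subrr add0r.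
by [].
Qed.

Lemma nuc_conv_Phi i x : normz n i = i ->
  (forall y z, M (i, x) (M (0, y) (0, z)) = M (M (i, x) (0, y)) (0, z)) ->
  forall y z, Phi i 0 y z = 0.
Proof.
move=> Ci H y z; have := f_equal snd (H y z).
rewrite (qmulE n 0 y 0 z) (qmulE n i x 0 y) !qmulE /=.
rewrite !addr0 !oppr0 normz0 Ci Phi_aa !addr0.
rewrite Phi_Dr !Phi_Dl (Phi_Radl _ _ _ (Rad_Phi _ _ _ _)) addr0.
exact: canc1.
Qed.

Lemma nuc_conv_Rad i x : normz n i = i -> n <> 1%N ->
  (forall y, M (i, x) (M (0, y) (1, 0)) = M (M (i, x) (0, y)) (1, 0)) ->
  Rd x.
Proof.
move=> Ci n1 H.
apply: (@Rad_gpowE i) => y.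
have := f_equal snd (H y).
rewrite (qmulE n 0 y 1 0) (qmulE n i x 0 y) !qmulE /=.
rewrite !addr0 !add0r oppr0 normz1 // Ci.
rewrite (Phi_Radr _ _ _ Rad0) (Phi_Radr _ _ _ Rad0) !addr0.
rewrite -!gpowN1 Phi_shiftr (gpow_addR _ _ (Rad_Phi _ _ _ _)) gpow_add gpow_Phi.
have key : Phi (2 * -1) (- -1) x y + Phi (i - -1) (0 - -1) x y =
           Phi (i + 1 + -1) (-1 + -1) x y + gamma (G i x) y.
  rewrite (Phi_swap (i - -1)) (@Phi_chain' _ (- -1) (0 - -1)); last by ring.
  rewrite (@Phi_eq _ _ (2 * -1) (i + 1)) //.
  rewrite Phi_step Phi_swap; congr (_ + _); apply: Phi_eq; ring.
rewrite -[in RHS]addrA key.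
exact: canc2.
Qed.

Lemma n1_rad x : n = 1%N -> Rd x.
Proof.
move=> n1; have [_ [r [[r0 Hr _] Hrn]]] := Hn (ltac:(by rewrite n1)).
move: Hrn; rewrite n1 dvdn1 => /eqP r1.
by have := Hr x; rewrite r1 big_ord1.
Qed.

Lemma main_sec i x : normz n i = i ->
    (in_nucleus g ginv gamma n (i, x) <->
       Rd x /\ (i = 0 \/ r_divides g ginv gamma i)) /\
    (in_center g ginv gamma n (i, x) <->
       [/\ in_nucleus g ginv gamma n (i, x),
           (forall y, G i y = y) & g x = x]).
Proof.
move=> Ci.
have P1 : in_nucleus g ginv gamma n (i, x) <-> Rd x /\ (i = 0 \/ r_divides g ginv gamma i).
  split.
    move=> [_ Hall].
    have H1 : forall y z, M (i, x) (M (0, y) (0, z)) = M (M (i, x) (0, y)) (0, z).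
      by move=> y z; case: (Hall (0, y) (0, z) normz0 normz0).
    split.
      case: (eqVneq n 1%N) => [n1|n1]; first exact: n1_rad.
      apply: (nuc_conv_Rad Ci (elimN eqP n1)) => y.
      by case: (Hall (0, y) (1, 0) normz0 (normz1 (elimN eqP n1))).
    case: (eqVneq i 0) => [->|i0]; first by left.
    right; apply: rdiv_of => //; apply: Phi0_rprop.
    exact: nuc_conv_Phi Ci H1.
  move=> [Hx Hi].
  have Vi : V i.
    case: Hi => [->|[r [[_ Hr _] Hd]]]; first exact: V0.
    rewrite -(divzK Hd); apply: VM; exact: V_r.
  split; first exact: Ci.
  move=> [j y] [k z] _ _; split.
  - exact: nuc1.
  - exact: nuc2.
  - exact: nuc3.
split => //.
split.
  move=> [Hnuc Hcomm].
  have [Hx _] := (proj1 P1) Hnuc.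
  split => //.
    move=> y.
    have := f_equal snd (Hcomm (0, y) normz0); rewrite !qmulE /=.
    rewrite (Phi_Radl _ _ _ Hx) (Phi_Radr _ _ _ Hx) !addr0 (addrC (G (- i) y)) => /addrI E.
    by rewrite {1}E gpowKN.
  case: (eqVneq n 1%N) => [n1|n1].
    have [Gn _] := Hn (ltac:(by rewrite n1)).
    by have := Gn x; rewrite n1.
  have := f_equal snd (Hcomm (1, 0) (normz1 (elimN eqP n1))); rewrite !qmulE /=.
  rewrite (Phi_Radl _ _ _ Hx) (Phi_Radr _ _ _ Hx) gpow00 !addr0 add0r => E.
  by rewrite -{1}E gVK.
move=> [Hnuc Hg Hgx]; split => // [[j y]] _.
have [Hx _] := (proj1 P1) Hnuc.
rewrite !qmulE (Phi_Radl _ _ _ Hx) (Phi_Radr _ _ _ Hx) !addr0 (addrC j).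
have E : G (- i) y = y by rewrite -{1}(Hg y) gpowNK.
by rewrite E (gpow_fix _ Hgx) (addrC x).
Qed.

End Basics.

Unset Implicit Arguments.

Theorem mainTheorem8 (X : zmodType) (g ginv : X -> X) (gamma : X -> X -> X)
  (n : nat) :
  construction_pair g ginv gamma ->
  ((0 < n)%N ->
     (forall x, gpow g ginv n%:Z x = x) /\
     (exists r, is_r g ginv gamma r /\ (r %| n)%N)) ->
  forall (i : int) (x : X), canon n (i, x) ->
    (in_nucleus g ginv gamma n (i, x) <->
       Rad gamma x /\ (i = 0 \/ r_divides g ginv gamma i)) /\
    (in_center g ginv gamma n (i, x) <->
       [/\ in_nucleus g ginv gamma n (i, x),
           (forall y, gpow g ginv i y = y) & g x = x]).
Proof.
move=> HC Hn i x Ci.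
have := @main_sec X g ginv gamma HC n Hn i x Ci. exact.
Qed.
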